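(* Let $S=\{s_1<\dots<s_{k_1}\}$ and $T=\{t_1<\dots<t_{k_2}\}$ be nonempty subsets of $\{1,\dots,n-1\}$ with $\max S+\min T\le n$ and $\min S+\max T\le n$, let $D$ be the digraph of $T_n\langle S;T\rangle$ and $d=\gcd\{s+t: s\in S,t\in T\}$. Let $\mathcal{I}_n=\{-n+1,\dots,n-1\}$ and for each positive integer $i$ define $P_i=\{\ell\in\mathcal{I}_n: \ell\equiv is_1\pmod d\}$; $Q_i=\{\sum_{j=1}^{k_1}a_js_j-\sum_{j=1}^{k_2}b_jt_j\in\mathcal{I}_n : a_j,b_j\in\mathbb{Z}_{\ge0},\ \sum_j a_j+\sum_j b_j=i\}$; $R_i$ = the set of $\ell\in\mathcal{I}_n$ such that for all vertices $u,v$ of $D$ with $v-u=\ell$ there is a directed $(u,v)$-walk of length $i$ in $D$. Then there is a positive integer $M$ such that $P_i=Q_i=R_i$ for every integer $i\ge M$.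
   Context: $T_n\langle S;T\rangle$ is the $n\times n$ $(0,1)$-matrix whose $(i,j)$-entry is $1$ iff $j-i\in S$ or $i-j\in T$; its digraph $D$ has vertex set $[n]$ and arc $(i,j)$ iff that entry is $1$. *)

(* Defs.v *)
From mathcomp Require Import all_boot all_order all_algebra.
Set Implicit Arguments. Unset Strict Implicit. Unset Printing Implicit Defensive.
Import GRing.Theory Num.Theory.

(* Sets S, T of positive integers are represented by duplicate-free lists of nat. *)
Definition seqmax (S : seq nat) : nat := \max_(s <- S) s.
Definition seqmin (S : seq nat) : nat := foldr minn (head 0%N S) S.

Definition gcdST (S T : seq nat) : nat :=
  foldr gcdn 0%N [seq (s + t)%N | s <- S, t <- T].

Definition arcST (S T : seq nat) (u v : nat) : bool :=
  ((u < v) && ((v - u)%N \in S)) || ((v < u) && ((u - v)%N \in T)).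

Fixpoint walkST (n : nat) (S T : seq nat) (i u v : nat) : bool :=
  match i with
  | 0 => u == v
  | i'.+1 => has (fun w => arcST S T u w && walkST n S T i' w v) (iota 1 n)
  end.

Definition inIn (n : nat) (l : int) : bool := (- (n%:Z) < l < n%:Z)%R.

Definition Pset (n : nat) (S T : seq nat) (i : nat) (l : int) : Prop :=
  inIn n l /\ (l = ((i * seqmin S)%N)%:Z %[mod (gcdST S T)%:Z])%Z.

Definition Qset (n : nat) (S T : seq nat) (i : nat) (l : int) : Prop :=
  inIn n l /\
  exists (a b : nat -> nat),
    (\sum_(s <- S) a s + \sum_(t <- T) b t)%N = i /\
    l = ((\sum_(s <- S) a s * s)%N%:Z - (\sum_(t <- T) b t * t)%N%:Z)%R.

Definition Rset (n : nat) (S T : seq nat) (i : nat) (l : int) : Prop :=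
  inIn n l /\
  forall u v : nat, (1 <= u <= n)%N -> (1 <= v <= n)%N ->
    (v%:Z - u%:Z)%R = l -> walkST n S T i u v.

(* Main.v *)
Require Import Defs.
From mathcomp Require Import all_boot all_order all_algebra.
From mathcomp Require Import zify ring.
Set Implicit Arguments. Unset Strict Implicit. Unset Printing Implicit Defensive.
Import GRing.Theory Num.Theory.

Section Walks.
Variables (n : nat) (S T : seq nat).

Lemma walk_cat i j u w v :
  walkST n S T i u w -> walkST n S T j w v -> walkST n S T (i + j) u v.
Proof.
elim: i u => [|i IH] u /=; first by move/eqP->.
move=> /hasP[x xin /andP[a W]] Wj; apply/hasP; exists x => //.
by rewrite a /= IH.
Qed.

Lemma walk1 u v : (1 <= v <= n) -> arcST S T u v -> walkST n S T 1 u v.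
Proof.
move=> vr a /=; apply/hasP; exists v; last by rewrite a eqxx.
by rewrite mem_iota; lia.
Qed.

Lemma walkS i u v w : (1 <= w <= n) -> arcST S T u w -> walkST n S T i w v ->
   walkST n S T i.+1 u v.
Proof. by move=> wr a W; rewrite -add1n; apply: walk_cat W; apply: walk1. Qed.

Lemma arc_inv u w : arcST S T u w ->
  (exists2 s, s \in S & w = u + s) \/ (exists2 t, t \in T & u = w + t).
Proof.
rewrite /arcST => /orP[/andP[lt m]|/andP[lt m]].
  by left; exists (w - u) => //; lia.
by right; exists (u - w) => //; lia.
Qed.

End Walks.

Section Rot.
Variables (n : nat) (S T : seq nat) (s t : nat).
Hypotheses (sS : s \in S) (tT : t \in T) (s0 : 0 < s) (t0 : 0 < t) (stn : s + t <= n).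

Lemma rot k z : z < s + t ->
  walkST n S T k (n - z) (n - (z + k * t) %% (s + t)).
Proof.
elim: k z => [|k IH] z zW.
  by rewrite /= mul0n addn0 modn_small.
have W0 : 0 < s + t by lia.
set z' := (z + t) %% (s + t).
have z'W : z' < s + t by rewrite ltn_mod.
have -> : (z + k.+1 * t) %% (s + t) = (z' + k * t) %% (s + t).
  by rewrite /z' modnDml; congr (_ %% _); lia.
apply: (@walkS _ _ _ _ _ _ (n - z')); first lia.
  rewrite /arcST /z'.
  case: (ltnP z s) => zs.
    rewrite (modn_small (_ : z + t < s + t)); last lia.
    apply/orP; right; apply/andP; split; first lia.
    by have -> : n - z - (n - (z + t)) = t by lia.
  have -> : (z + t) %% (s + t) = z - s.
    by rewrite -(modn_small (_ : z - s < s + t)); last lia;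
       rewrite -(modnDr (z - s)); congr (_ %% _); lia.
  apply/orP; left; apply/andP; split; first lia.
  by have -> : n - (z - s) - (n - z) = s by lia.
exact: IH.
Qed.

Lemma rot_closed z : z < s + t ->
  walkST n S T ((s + t) %/ gcdn s t) (n - z) (n - z).
Proof.
move=> zW; have := rot ((s + t) %/ gcdn s t) zW.
have g1 : gcdn s t %| s + t by rewrite dvdn_add ?dvdn_gcdl ?dvdn_gcdr.
have g2 : gcdn s t %| t by rewrite dvdn_gcdr.
suff -> : (z + (s + t) %/ gcdn s t * t) %% (s + t) = z by [].
rewrite [_ * t]mulnC. rewrite (muln_divCA g2 g1). by rewrite addnC mulnC modnMDl modn_small.
Qed.

Lemma rot_conn z z' : z < s + t -> z' < s + t -> z %% gcdn s t = z' %% gcdn s t ->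
  exists k, walkST n S T k (n - z) (n - z').
Proof.
move=> zW z'W zz.
have W0 : 0 < s + t by lia.
have [a _ da] := Bezoutl t W0.
have gg : gcdn (s + t) t = gcdn s t by rewrite gcdnC gcdnDr gcdnC.
rewrite gg in da.
have [q Eq] : exists q, gcdn s t + a * t = q * (s + t) by apply/dvdnP.
set g := gcdn s t in zz gg Eq da *.
have g0 : 0 < g by rewrite gcdn_gt0 s0.
have gW : g %| s + t by rewrite dvdn_add ?dvdn_gcdl ?dvdn_gcdr.
have gd : g %| z + (s + t) - z'.
  rewrite -eqn_mod_dvd; last lia.
  by rewrite -modnDm (eqP gW) addn0 modn_mod zz.
have [j Ej] : exists j, z + (s + t) - z' = j * g by apply/dvdnP.
exists (j * a).
have key : z + j * a * t + (s + t) = z' + (j * q) * (s + t).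
  have : j * (g + a * t) = j * (q * (s + t)) by rewrite Eq.
  rewrite mulnDr !mulnA.
  move: (j * g) (j * a * t) (j * q * (s + t)) Ej => G X Y Ej HH.
  lia.
suff E : (z + j * a * t) %% (s + t) = z' by rewrite -E; apply: rot.
by rewrite -modnDr key addnC modnMDl modn_small.
Qed.
End Rot.

Section FW.
Variables (N : nat) (R : nat -> nat -> Prop).
Hypotheses (Rrefl : forall x, R x x) (Rtrans : forall x y z, R x y -> R y z -> R x z).

Definition Hm m := forall x y, x < N -> y < N -> x %% m = y %% m -> R x y.

Lemma Hsub a b : a < b -> a + b <= N -> Hm a -> Hm b -> Hm (b - a).
Proof.
move=> ab abN Ha Hb.
set m := b - a.
have step : forall x, x + m < N -> R x (x + m) /\ R (x + m) x.
  move=> x xm.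
  case: (ltnP (x + b) N) => xb.
    have h1 : R x (x + b) by apply: Hb; rewrite ?modnDr //; lia.
    have h2 : R (x + b) (x + m) by apply: Ha; try lia;
      rewrite (_ : x + b = (x + m) + a) ?modnDr //; lia.
    have h1' : R (x + b) x by apply: Hb; rewrite ?modnDr //; lia.
    have h2' : R (x + m) (x + b) by apply: Ha; try lia;
      rewrite (_ : x + b = (x + m) + a) ?modnDr //; lia.
    split; [exact: Rtrans h1 h2 | exact: Rtrans h2' h1'].
  have h1 : R x (x - a) by apply: Ha; try lia;
      rewrite {1}(_ : x = (x - a) + a) ?modnDr //; lia.
  have h1' : R (x - a) x by apply: Ha; try lia;
      rewrite {2}(_ : x = (x - a) + a) ?modnDr //; lia.
  have h2 : R (x - a) (x + m) by apply: Hb; try lia;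
      rewrite (_ : x + m = (x - a) + b) ?modnDr //; lia.
  have h2' : R (x + m) (x - a) by apply: Hb; try lia;
      rewrite (_ : x + m = (x - a) + b) ?modnDr //; lia.
  split; [exact: Rtrans h1 h2 | exact: Rtrans h2' h1'].
have multi : forall j x, x + j * m < N -> R x (x + j * m) /\ R (x + j * m) x.
  elim=> [|j IH] x xj; first by rewrite mul0n addn0.
  have [h1 h1'] := step x (ltac:(lia)).
  have [h2 h2'] := IH (x + m) (ltac:(lia)).
  have e : x + m + j * m = x + j.+1 * m by rewrite mulSn; lia.
  rewrite e in h2 h2'.
  split; [exact: Rtrans h1 h2 | exact: Rtrans h2' h1'].
move=> x y xN yN xy.
have m0 : 0 < m by lia.
case: (leqP x y) => lexy.
  have : m %| y - x by rewrite -eqn_mod_dvd // xy.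
  move/dvdnP=> [j Ej].
  have ey : y = x + j * m by lia.
  by rewrite ey; apply: (proj1 (multi j x _)); lia.
have : m %| x - y by rewrite -eqn_mod_dvd ?xy //; lia.
move/dvdnP=> [j Ej].
have ex : x = y + j * m by lia.
by rewrite ex; apply: (proj2 (multi j y _)); lia.
Qed.

Lemma FW k : forall a b, a + b <= k -> a + b <= N -> Hm a -> Hm b -> Hm (gcdn a b).
Proof.
elim: k => [|k IH] a b abk abN Ha Hb.
  have a0 : a = 0 by lia.
  by rewrite a0 gcd0n.
case: (posnP a) => [->|a0]; first by rewrite gcd0n.
case: (posnP b) => [->|b0]; first by rewrite gcdn0.
case: (ltngtP a b) => ab.
- have -> : gcdn a b = gcdn a (b - a).
    by rewrite -{1}(subnK (ltnW ab)) gcdnDr.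
  apply: IH => //; try lia.
  exact: Hsub.
- have -> : gcdn a b = gcdn (a - b) b.
    by rewrite -{1}(subnK (ltnW ab)) gcdnC gcdnDr gcdnC.
  apply: IH => //; try lia.
  apply: Hsub => //; lia.
- by rewrite ab gcdnn.
Qed.
End FW.

Section Semi.
Variable X : nat -> Prop.
Hypotheses (X0 : X 0) (Xadd : forall a b, X a -> X b -> X (a + b)).

Lemma Xmul k a : X a -> X (k * a).
Proof. by move=> Xa; elim: k => [|k IH]; rewrite ?mul0n // mulSn; apply: Xadd. Qed.

Lemma semi2 a b : 0 < a -> X a -> X b ->
  exists K0, forall m, K0 <= m -> X (m * gcdn a b).
Proof.
move=> a0 Xa Xb.
have [k _ dk] := Bezoutl b a0.
set g := gcdn a b in dk *.
have g0 : 0 < g by rewrite gcdn_gt0 a0.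
have [q Eq] : exists q, g + k * b = q * a by apply/dvdnP.
set A := a %/ g. set B := b %/ g.
have eA : a = A * g by rewrite /A divnK // dvdn_gcdl.
have eB : b = B * g by rewrite /B divnK // dvdn_gcdr.
have A0 : 0 < A by rewrite /A divn_gt0 // dvdn_leq // dvdn_gcdl.
exists ((A - 1) * (k * B)) => m Hm.
set m' := m - (A - 1) * (k * B).
have em' : m' = m' %/ A * A + m' %% A := divn_eq m' A.
have rA : m' %% A < A := ltn_pmod m' A0.
set r := m' %% A in em' rA. set j := m' %/ A in em'.
have XC : X (k * b) by apply: Xmul.
have XCg : X (k * b + g) by rewrite addnC Eq; apply: Xmul.
have XA : X (j * a) by apply: Xmul.
suff -> : m * g = (A - 1 - r) * (k * b) + r * (k * b + g) + j * a.
  by apply: Xadd => //; apply: Xadd; apply: Xmul.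
have e1 : A - 1 - r + r = A - 1 by lia.
have em : m = (A - 1 - r + r) * (k * B) + (j * A + r).
  by rewrite e1 -em' /m' subnKC.
rewrite em eA eB.
move: (A - 1 - r) => x.
ring.
Qed.

Lemma semi_list (l : seq nat) : all (fun x => 0 < x) l -> (forall x, x \in l -> X x) ->
  exists K0, forall m, K0 <= m -> X (m * foldr gcdn 0 l).
Proof.
elim: l => [|x l IH] /=.
  by move=> _ _; exists 0 => m _; rewrite muln0.
move=> /andP[x0 al] Xl.
have Xx : X x by apply: Xl; rewrite inE eqxx.
have [K' HK'] := IH al (fun y yl => Xl y (ltac:(by rewrite inE yl orbT))).
set g' := foldr gcdn 0 l in HK' *.
case: (posnP g') => [g'0|g'pos].
  by exists 0 => m _; rewrite g'0 gcdn0; apply: Xmul.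
have Xa : X ((K' * x + 1) * g') by apply: HK'; nia.
have a0 : 0 < (K' * x + 1) * g' by rewrite muln_gt0 g'pos addn1.
have [K0 HK0] := semi2 a0 Xa Xx.
exists K0 => m Hm.
have -> : gcdn x g' = gcdn ((K' * x + 1) * g') x.
  rewrite [RHS]gcdnC Gauss_gcdr //.
  by rewrite /coprime gcdnMDl gcdn1.
exact: HK0.
Qed.
End Semi.

Lemma fg_mem a l x : x \in l -> foldr gcdn a l %| x.
Proof.
elim: l => //= y l IH; rewrite inE => /orP[/eqP->|xl]; first exact: dvdn_gcdl.
exact: dvdn_trans (dvdn_gcdr _ _) (IH xl).
Qed.

Lemma fg_a a l : foldr gcdn a l %| a.
Proof. elim: l => //= y l IH; exact: dvdn_trans (dvdn_gcdr _ _) IH. Qed.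

Lemma fg_gcd k a l : k %| a -> (forall x, x \in l -> k %| x) -> k %| foldr gcdn a l.
Proof.
move=> ka; elim: l => //= y l IH H; rewrite dvdn_gcd H ?inE ?eqxx //= IH //.
by move=> x xl; apply: H; rewrite inE xl orbT.
Qed.

Lemma fg_pos a l x : x \in l -> 0 < x -> 0 < foldr gcdn a l.
Proof.
move=> xl x0; have := fg_mem a xl.
by case: (foldr gcdn a l) => //; rewrite dvd0n => /eqP x00; rewrite x00 in x0.
Qed.

Section NT.
Variable h : nat.
Hypothesis h0 : 0 < h.
Local Notation pi0 := (\pi(h)).

Lemma partF a b : 0 < a -> 0 < b -> h %| (a + b) %/ gcdn a b ->
  a`_pi0 = (gcdn a b)`_pi0.
Proof.
move=> a0 b0 hd.
set G := gcdn a b in hd *.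
have G0 : 0 < G by rewrite gcdn_gt0 a0.
have Ga : G %| a by apply: dvdn_gcdl.
have Gb : G %| b by apply: dvdn_gcdr.
set a' := a %/ G. set b' := b %/ G.
have ea : a = a' * G by rewrite divnK.
have eb : b = b' * G by rewrite divnK.
have a'0 : 0 < a' by rewrite /a' divn_gt0 // dvdn_leq.
have cop : coprime h a'.
  rewrite /coprime gcdnC.
  set q := gcdn a' h.
  have qa : q %| a' by apply: dvdn_gcdl.
  have qh : q %| h by apply: dvdn_gcdr.
  have qab : q %| a' + b'.
    by apply: dvdn_trans qh _; rewrite /a' /b' -divnDl.
  have qb : q %| b' by rewrite -(dvdn_addr _ qa).
  have qG : q * G %| G.
    rewrite dvdn_gcd {1}ea {1}eb.
    by rewrite !dvdn_mul.
  by rewrite -{2}(mul1n G) dvdn_pmul2r // in qG; rewrite -dvdn1.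
have p'a : (pi0^').-nat a' by rewrite -coprime_pi'.
by rewrite ea partnM // (part_p'nat p'a) mul1n.
Qed.

Lemma partK a b K : 0 < a -> 0 < b -> h %| (a + b) %/ gcdn a b ->
  a`_pi0 = K -> h * K %| a + b.
Proof.
move=> a0 b0 hd aK.
have G0 : 0 < gcdn a b by rewrite gcdn_gt0 a0.
have KG : K %| gcdn a b by rewrite -aK (partF a0 b0 hd) dvdn_part.
have : h * gcdn a b %| a + b by rewrite -dvdn_divRL // dvdn_add ?dvdn_gcdl ?dvdn_gcdr.
by apply: dvdn_trans; rewrite dvdn_mul.
Qed.
End NT.

Definition Lseq (S T : seq nat) :=
  [seq (s + seqmin T) %/ gcdn s (seqmin T) | s <- S] ++
  [seq (seqmin S + t) %/ gcdn (seqmin S) t | t <- T].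

Lemma NTmain (S T : seq nat) m :
  seqmin S \in S -> seqmin T \in T -> all (fun x => 0 < x) S -> all (fun x => 0 < x) T ->
  gcdST S T %| m * seqmin S -> foldr gcdn 0 (Lseq S T) %| m.
Proof.
set c := seqmin S; set tau := seqmin T.
move=> cS tT /allP Sp /allP Tp dm.
set h := foldr gcdn 0 (Lseq S T).
have c0 : 0 < c by apply: Sp.
have tau0 : 0 < tau by apply: Tp.
have h0 : 0 < h.
  apply: (@fg_pos _ _ ((c + tau) %/ gcdn c tau)).
    by rewrite mem_cat; apply/orP; left; apply/mapP; exists c.
  by rewrite divn_gt0 ?gcdn_gt0 ?c0 // dvdn_leq ?addn_gt0 ?c0 // dvdn_add ?dvdn_gcdl ?dvdn_gcdr.
have hS : forall s, s \in S -> h %| (s + tau) %/ gcdn s tau.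
  by move=> s sS; apply: fg_mem; rewrite mem_cat; apply/orP; left; apply/mapP; exists s.
have hT : forall t, t \in T -> h %| (c + t) %/ gcdn c t.
  by move=> t tT'; apply: fg_mem; rewrite mem_cat; apply/orP; right; apply/mapP; exists t.
set K := c`_(\pi(h)).
have tauK : tau`_(\pi(h)) = K.
  have hc' : h %| (tau + c) %/ gcdn tau c by rewrite addnC gcdnC; apply: hS.
  by rewrite /K (partF h0 c0 tau0 (hS c cS)) (partF h0 tau0 c0 hc') gcdnC.
have sK : forall s, s \in S -> s`_(\pi(h)) = K.
  move=> s sS.
  have hc' : h %| (tau + s) %/ gcdn tau s by rewrite addnC gcdnC; apply: hS.
  by rewrite -tauK (partF h0 (Sp s sS) tau0 (hS s sS)) (partF h0 tau0 (Sp s sS) hc') gcdnC.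
have hKS : forall s, s \in S -> h * K %| s + tau.
  by move=> s sS; apply: partK => //; [apply: Sp | apply: hS | apply: sK].
have hKT : forall t, t \in T -> h * K %| c + t.
  by move=> t tT'; apply: partK => //; [apply: Tp | apply: hT ].
have hKd : h * K %| gcdST S T.
  apply: fg_gcd => // x /allpairsP[[s t] [/= sS tT' ->]].
  have : h * K %| (s + t) + (c + tau).
    have e : s + t + (c + tau) = (s + tau) + (c + t) by lia.
    by rewrite e dvdn_add ?hKS ?hKT.
  by rewrite dvdn_addl // hKS.
have K0 : 0 < K by apply: part_gt0.
have ec : c = K * c`_(\pi(h))^' by rewrite /K partnC.
have : h * K %| (m * c`_(\pi(h))^') * K.
  by rewrite -mulnA [c`_(\pi(h))^' * K]mulnC -ec; apply: dvdn_trans dm.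
rewrite dvdn_pmul2r // mulnC Gauss_dvdr //.
exact: pnat_coprime (pnat_pi h0) (part_pnat _ _).
Qed.

Lemma foldr_minn_props a l :
  foldr minn a l <= a /\ (forall y, y \in l -> foldr minn a l <= y) /\ foldr minn a l \in a :: l.
Proof.
elim: l => [|x l [IH1 [IH2 IH3]]] /=; first by rewrite inE eqxx.
split; first lia.
split.
  move=> y; rewrite inE => /orP[/eqP->|yl]; first lia.
  by have := IH2 y yl; lia.
rewrite /minn; case: ifP => _; first by rewrite !inE eqxx orbT.
by move: IH3; rewrite !inE => /orP[->|->]; rewrite ?orbT.
Qed.

Lemma seqmin_mem S : S != [::] -> seqmin S \in S.
Proof.
case: S => // x l _; rewrite /seqmin /=.
have [_ [_ H]] := foldr_minn_props x (x :: l).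
by move: H; rewrite /= inE => /orP[/eqP->|]; rewrite ?inE ?eqxx.
Qed.

Lemma seqmin_le S s : s \in S -> seqmin S <= s.
Proof.
case: S => // x l sS; rewrite /seqmin /=.
by have [_ [H _]] := foldr_minn_props x (x :: l); apply: H.
Qed.

Lemma seqmax_ge S s : s \in S -> s <= seqmax S.
Proof. by move=> sS; rewrite /seqmax; exact: (@leq_bigmax_seq _ S (fun _ => true) (fun x => x) s sS isT). Qed.

Lemma sum_eq_count (l : seq nat) y : \sum_(x <- l) (x == y) = count_mem y l.
Proof. by elim: l => [|x l IH]; rewrite ?big_nil ?big_cons ?IH. Qed.

Lemma sum_eq_count2 (l : seq nat) y : \sum_(x <- l) (x == y) * x = count_mem y l * y.
Proof.
elim: l => [|x l IH]; rewrite ?big_nil ?big_cons ?IH //=.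
by case: eqP => [->|]; rewrite ?mul1n ?mul0n ?add0n // mulnDl mul1n.
Qed.

Section Main.
Variables (n : nat) (S T : seq nat).
Hypotheses (S0 : S != [::]) (T0 : T != [::]) (uS : uniq S) (uT : uniq T)
  (Sr : all (fun s => 0 < s < n) S) (Tr : all (fun t => 0 < t < n) T)
  (h1 : seqmax S + seqmin T <= n) (h2 : seqmin S + seqmax T <= n).

Local Notation c := (seqmin S).
Local Notation tau := (seqmin T).
Local Notation d := (gcdST S T).

Let cS : c \in S := seqmin_mem S0.
Let tT : tau \in T := seqmin_mem T0.
Let Sp s : s \in S -> 0 < s < n := fun h => (allP Sr) s h.
Let Tp t : t \in T -> 0 < t < n := fun h => (allP Tr) t h.
Let sn s : s \in S -> s + tau <= n.
Proof. by move=> sS; have := seqmax_ge sS; lia. Qed.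
Let tn t : t \in T -> c + t <= n.
Proof. by move=> tT'; have := seqmax_ge tT'; lia. Qed.
Let c0 : 0 < c. Proof. by have := Sp cS; lia. Qed.
Let tau0 : 0 < tau. Proof. by have := Tp tT; lia. Qed.

Lemma d_st s t : s \in S -> t \in T -> d %| s + t.
Proof. by move=> sS tT'; apply: fg_mem; apply: allpairs_f. Qed.

Lemma dZ_s s : s \in S -> (d%:Z %| (s%:Z - c%:Z)%R)%Z.
Proof.
move=> sS.
have -> : (s%:Z - c%:Z = (s + tau)%N%:Z - (c + tau)%N%:Z)%R by lia.
by apply: rpredB; rewrite dvdzE /= ?d_st.
Qed.

Lemma dZ_t t : t \in T -> (d%:Z %| (t%:Z + c%:Z)%R)%Z.
Proof.
by move=> tT'; rewrite -PoszD dvdzE /= addnC d_st.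
Qed.

Lemma inv k x y : walkST n S T k x y -> (d%:Z %| (y%:Z - x%:Z - (k * c)%N%:Z)%R)%Z.
Proof.
elim: k x => [|k IH] x /=.
  by move/eqP->; rewrite mul0n subrr subr0 dvdz0.
move=> /hasP[w _ /andP[a W]].
have IHw := IH w W.
case: (arc_inv a) => [[s sS ew]|[t tT' ex]].
  have -> : (y%:Z - x%:Z - (k.+1 * c)%N%:Z =
     (y%:Z - w%:Z - (k * c)%N%:Z) + (s%:Z - c%:Z))%R by rewrite ew; lia.
  by apply: rpredD => //; apply: dZ_s.
have -> : (y%:Z - x%:Z - (k.+1 * c)%N%:Z =
     (y%:Z - w%:Z - (k * c)%N%:Z) - (t%:Z + c%:Z))%R by rewrite ex; lia.
by apply: rpredB => //; apply: dZ_t.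
Qed.

Lemma counts k x y : walkST n S T k x y -> exists a b : nat -> nat,
  (\sum_(s <- S) a s + \sum_(t <- T) b t)%N = k /\
  (y%:Z - x%:Z = (\sum_(s <- S) a s * s)%N%:Z - (\sum_(t <- T) b t * t)%N%:Z)%R.
Proof.
elim: k x => [|k IH] x /=.
  move/eqP->; exists (fun _ => 0), (fun _ => 0).
  by rewrite !big1 //= subrr.
move=> /hasP[w _ /andP[ar W]].
have [a [b [Hs Hv]]] := IH w W.
case: (arc_inv ar) => [[s0 sS ew]|[t0 tT' ex]].
  exists (fun s => a s + (s == s0)), b; split.
    rewrite big_split /= sum_eq_count count_uniq_mem // sS; lia.
  have -> : \sum_(s <- S) (a s + (s == s0)) * s = \sum_(s <- S) a s * s + s0.
    under eq_bigr => s _ do rewrite mulnDl.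
    by rewrite big_split /= sum_eq_count2 count_uniq_mem // sS mul1n.
  move: Hv; rewrite ew; lia.
exists a, (fun t => b t + (t == t0)); split.
  rewrite big_split /= sum_eq_count count_uniq_mem // tT'; lia.
have -> : \sum_(t <- T) (b t + (t == t0)) * t = \sum_(t <- T) b t * t + t0.
  under eq_bigr => t _ do rewrite mulnDl.
  by rewrite big_split /= sum_eq_count2 count_uniq_mem // tT' mul1n.
move: Hv; rewrite ex; lia.
Qed.

Lemma sumS_mod (l : seq nat) (a : nat -> nat) : {subset l <= S} ->
  (d%:Z %| ((\sum_(s <- l) a s * s)%N%:Z - ((\sum_(s <- l) a s) * c)%N%:Z)%R)%Z.
Proof.
elim: l => [|x l IH] sub; first by rewrite !big_nil mul0n subrr dvdz0.
rewrite !big_cons.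
have xS : x \in S by apply: sub; rewrite inE eqxx.
have IH' := IH (fun y yl => sub y (ltac:(by rewrite inE yl orbT))).
have -> : ((a x * x + \sum_(s <- l) a s * s)%N%:Z - ((a x + \sum_(s <- l) a s) * c)%N%:Z =
  (a x)%:Z * (x%:Z - c%:Z) + ((\sum_(s <- l) a s * s)%N%:Z - ((\sum_(s <- l) a s) * c)%N%:Z))%R.
  by lia.
by apply: rpredD => //; apply: dvdz_mull; apply: dZ_s.
Qed.

Lemma sumT_mod (l : seq nat) (b : nat -> nat) : {subset l <= T} ->
  (d%:Z %| ((\sum_(t <- l) b t * t)%N%:Z + ((\sum_(t <- l) b t) * c)%N%:Z)%R)%Z.
Proof.
elim: l => [|x l IH] sub; first by rewrite !big_nil mul0n addr0 dvdz0.
rewrite !big_cons.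
have xT : x \in T by apply: sub; rewrite inE eqxx.
have IH' := IH (fun y yl => sub y (ltac:(by rewrite inE yl orbT))).
have -> : ((b x * x + \sum_(t <- l) b t * t)%N%:Z + ((b x + \sum_(t <- l) b t) * c)%N%:Z =
  (b x)%:Z * (x%:Z + c%:Z) + ((\sum_(t <- l) b t * t)%N%:Z + ((\sum_(t <- l) b t) * c)%N%:Z))%R.
  by lia.
by apply: rpredD => //; apply: dvdz_mull; apply: dZ_t.
Qed.


Let Nn : c + tau <= n. Proof. by have := seqmax_ge cS; lia. Qed.

Lemma enter x : 1 <= x <= n -> exists k z, z < c + tau /\ walkST n S T k x (n - z).
Proof.
move: {2}(n - x) (leqnn (n - x)) => m; elim: m x => [|m IH] x Hm xr.
  by exists 0, (n - x); split; [lia | rewrite /= subKn //; lia].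
case: (ltnP (n - x) (c + tau)) => Hx.
  by exists 0, (n - x); split; [lia | rewrite /= subKn //; lia].
have [k [z [zN W]]] := IH (x + c) (ltac:(lia)) (ltac:(lia)).
exists k.+1, z; split => //.
apply: (walkS (w := x + c)) W; first lia.
rewrite /arcST; apply/orP; left; apply/andP; split; first lia.
by have -> : x + c - x = c by lia.
Qed.

Lemma exit v : 1 <= v <= n -> exists k z, z < c + tau /\ walkST n S T k (n - z) v.
Proof.
move: {2}(n - v) (leqnn (n - v)) => m; elim: m v => [|m IH] v Hm vr.
  by exists 0, (n - v); split; [lia | rewrite /= subKn //; lia].
case: (ltnP (n - v) (c + tau)) => Hv.
  by exists 0, (n - v); split; [lia | rewrite /= subKn //; lia].
have [k [z [zN W]]] := IH (v + tau) (ltac:(lia)) (ltac:(lia)).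
exists (k + 1), z; split => //.
apply: (walk_cat W); apply: walk1; first lia.
rewrite /arcST; apply/orP; right; apply/andP; split; first lia.
by have -> : v + tau - v = tau by lia.
Qed.

Definition Rz z z' := exists k, walkST n S T k (n - z) (n - z').
Lemma Rz_refl x : Rz x x. Proof. by exists 0; rewrite /= eqxx. Qed.
Lemma Rz_trans x y z : Rz x y -> Rz y z -> Rz x z.
Proof. by move=> [k1 W1] [k2 W2]; exists (k1 + k2); apply: walk_cat W1 W2. Qed.

Definition Gs := [seq gcdn s tau | s <- S] ++ [seq gcdn c t | t <- T].
Definition e2 := foldr gcdn (gcdn c tau) Gs.

Lemma Hg0 : Hm (c + tau) Rz (gcdn c tau).
Proof. by move=> z z' zN z'N; apply: rot_conn => //; apply: sn. Qed.

Lemma HGs g : g \in Gs -> [/\ Hm (c + tau) Rz g, 0 < g & g <= maxn c tau].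
Proof.
rewrite mem_cat => /orP[/mapP[s sS ->]|/mapP[t tT' ->]].
  have sp := Sp sS; have cs := seqmin_le sS.
  split.
  - move=> z z' zN z'N; have s0 : 0 < s by lia.
    apply: (rot_conn sS tT s0 tau0 (sn sS)); lia.
  - by rewrite gcdn_gt0; apply/orP; left; lia.
  - by have := dvdn_leq tau0 (dvdn_gcdr s tau); lia.
have tp := Tp tT'; have ct := seqmin_le tT'.
split.
- move=> z z' zN z'N; have t0 : 0 < t by lia.
  apply: (rot_conn cS tT' c0 t0 (tn tT')); lia.
- by rewrite gcdn_gt0 c0.
- by have := dvdn_leq c0 (dvdn_gcdl c t); lia.
Qed.

Lemma conn : Hm (c + tau) Rz e2 /\ e2 %| gcdn c tau.
Proof.
rewrite /e2; have : {subset Gs <= Gs} by [].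
elim: {-2}Gs => [|g l IH] sub /=; first by split; [exact: Hg0 | exact: dvdnn].
have [IH1 IH2] := IH (fun y yl => sub y (ltac:(by rewrite inE yl orbT))).
have [Hg gp gle] := HGs (sub g (ltac:(by rewrite inE eqxx))).
have g0p : 0 < gcdn c tau by rewrite gcdn_gt0 c0.
have m1 := dvdn_leq g0p IH2.
have m2 := dvdn_leq c0 (dvdn_gcdl c tau).
have m3 := dvdn_leq tau0 (dvdn_gcdr c tau).
split; last by apply: dvdn_trans IH2; apply: dvdn_gcdr.
apply: (FW Rz_refl Rz_trans (k := g + foldr gcdn (gcdn c tau) l)) => //; lia.
Qed.

Lemma e2c : e2 %| c.
Proof. by apply: dvdn_trans (proj2 conn) _; apply: dvdn_gcdl. Qed.

Lemma e2d : e2 %| d.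
Proof.
apply: fg_gcd => // x /allpairsP[[s t] [/= sS tT' ->]].
apply: dvdn_add.
  apply: dvdn_trans (dvdn_gcdl s tau).
  by apply: fg_mem; rewrite mem_cat; apply/orP; left; apply/mapP; exists s.
apply: dvdn_trans (dvdn_gcdr c t).
by apply: fg_mem; rewrite mem_cat; apply/orP; right; apply/mapP; exists t.
Qed.

Lemma e2walk k x y : walkST n S T k x y -> (e2%:Z %| (y%:Z - x%:Z)%R)%Z.
Proof.
move=> W; have I := inv W.
have -> : (y%:Z - x%:Z = (y%:Z - x%:Z - (k * c)%N%:Z) + (k * c)%N%:Z)%R by lia.
apply: rpredD.
  by apply: dvdz_trans I; rewrite dvdzE /= e2d.
by rewrite dvdzE /= dvdn_mull // e2c.
Qed.

Lemma per_pair u v : 1 <= u <= n -> 1 <= v <= n -> exists B, forall i, B <= i ->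
  (d%:Z %| (v%:Z - u%:Z - (i * c)%N%:Z)%R)%Z -> walkST n S T i u v.
Proof.
move=> ur vr.
case: (boolP (e2%:Z %| (v%:Z - u%:Z)%R)%Z) => He; last first.
  exists 0 => i _ Hd; exfalso; move/negP: He; apply.
  have -> : (v%:Z - u%:Z = (v%:Z - u%:Z - (i * c)%N%:Z) + (i * c)%N%:Z)%R by lia.
  apply: rpredD.
    by apply: dvdz_trans Hd; rewrite dvdzE /= e2d.
  by rewrite dvdzE /= dvdn_mull // e2c.
have [k1 [z1 [z1N W1]]] := enter ur.
have [k2 [z2 [z2N W2]]] := exit vr.
have E1 := e2walk W1. have E2 := e2walk W2.
have Ez : (e2%:Z %| (z1%:Z - z2%:Z)%R)%Z.
  have -> : (z1%:Z - z2%:Z = (v%:Z - u%:Z) - ((n - z1)%N%:Z - u%:Z) - (v%:Z - (n - z2)%N%:Z))%R.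
    have z1n : z1 <= n by apply: leq_trans (ltnW z1N) Nn.
    have z2n : z2 <= n by apply: leq_trans (ltnW z2N) Nn.
    rewrite -!subzn //; ring.
  by apply: rpredB; [apply: rpredB|].
have Hmod : z1 %% e2 = z2 %% e2.
  have := eqz_mod_dvd (e2%:Z) (z1%:Z) (z2%:Z); rewrite Ez => /eqP.
  by rewrite !modz_nat => -[].
have [k3 W3] := (proj1 conn) z1 z2 z1N z2N Hmod.
set y := n - z2.
have Lpos : all (fun x => 0 < x) (Lseq S T).
  rewrite all_cat; apply/andP; split; apply/allP => x /mapP.
    move=> [s sS ->]; have sp := Sp sS.
    rewrite divn_gt0 ?gcdn_gt0 ?tau0 ?orbT // dvdn_leq ?addn_gt0 ?tau0 ?orbT //.
    by rewrite dvdn_add ?dvdn_gcdl ?dvdn_gcdr.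
  move=> [t tT' ->]; have tp := Tp tT'.
  rewrite divn_gt0 ?gcdn_gt0 ?c0 // dvdn_leq ?addn_gt0 ?c0 //.
  by rewrite dvdn_add ?dvdn_gcdl ?dvdn_gcdr.
have Lmem : forall x, x \in Lseq S T -> walkST n S T x y y.
  move=> x; rewrite mem_cat => /orP[/mapP[s sS ->]|/mapP[t tT' ->]].
    have sp := Sp sS; have cs := seqmin_le sS.
    have s0 : 0 < s by case/andP: sp.
    have zl : z2 < s + tau by apply: leq_trans z2N _; rewrite leq_add2r.
    exact: (rot_closed sS tT s0 tau0 (sn sS) zl).
  have tp := Tp tT'; have ct := seqmin_le tT'.
  have t0 : 0 < t by case/andP: tp.
  have zl : z2 < c + t by apply: leq_trans z2N _; rewrite leq_add2l.
  exact: (rot_closed cS tT' c0 t0 (tn tT') zl).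
have [K0 HK0] := semi_list (X := fun k => walkST n S T k y y)
   (ltac:(by rewrite /= eqxx)) (fun a b Wa Wb => walk_cat Wa Wb) Lpos Lmem.
set h := foldr gcdn 0 (Lseq S T) in HK0.
have h0 : 0 < h.
  apply: (@fg_pos _ _ ((c + tau) %/ gcdn c tau)).
    by rewrite mem_cat; apply/orP; left; apply/mapP; exists c.
  by rewrite divn_gt0 ?gcdn_gt0 ?c0 // dvdn_leq ?addn_gt0 ?c0 // dvdn_add ?dvdn_gcdl ?dvdn_gcdr.
set b0 := k1 + (k3 + k2).
exists (b0 + K0 * h) => i Hi Hd.
have Wb : walkST n S T b0 u v by apply: walk_cat W1 (walk_cat W3 W2).
have Ib := inv Wb.
have Hd2 : (d%:Z %| ((i - b0) * c)%N%:Z)%Z.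
  rewrite PoszM -subzn; last by apply: leq_trans Hi; apply: leq_addr.
  have -> : ((i%:Z - b0%:Z) * c%:Z = (v%:Z - u%:Z - (b0 * c)%N%:Z) - (v%:Z - u%:Z - (i * c)%N%:Z))%R.
    by rewrite !PoszM; ring.
  exact: rpredB.
rewrite dvdzE /= in Hd2.
have hd : h %| i - b0.
  apply: NTmain => //; apply/allP => x xin.
    by case/andP: (Sp xin).
  by case/andP: (Tp xin).
set m := (i - b0) %/ h.
have em : i - b0 = m * h by rewrite /m divnK.
have mK : K0 <= m.
  rewrite -(leq_pmul2r h0) -em; clear -Hi; lia.
have -> : i = k1 + (k3 + (m * h + k2)).
  rewrite /b0 in em Hi; move: em Hi; move: (m * h) (K0 * h) => X Y; clear; lia.
by apply: walk_cat W1 (walk_cat W3 (walk_cat (HK0 m mK) W2)).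
Qed.

End Main.

Lemma unif (P : nat -> nat -> nat -> Prop)
  (mono : forall u v B B', P u v B -> B <= B' -> P u v B') (l : seq (nat * nat)) :
  (forall p, p \in l -> exists B, P p.1 p.2 B) -> exists M, forall p, p \in l -> P p.1 p.2 M.
Proof.
elim: l => [|p l IH] H; first by exists 0.
have [B HB] := H p (ltac:(by rewrite inE eqxx)).
have [M HM] := IH (fun q ql => H q (ltac:(by rewrite inE ql orbT))).
exists (maxn B M) => q; rewrite inE => /orP[/eqP->|ql].
  by apply: mono HB _; apply: leq_maxl.
by apply: mono (HM q ql) _; apply: leq_maxr.
Qed.

Unset Implicit Arguments.
Theorem theorem2p9 (n : nat) (S T : seq nat) :
  S != [::] -> T != [::] -> uniq S -> uniq T ->
  all (fun s => (0 < s < n)%N) S -> all (fun t => (0 < t < n)%N) T ->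
  (seqmax S + seqmin T <= n)%N -> (seqmin S + seqmax T <= n)%N ->
  exists M : nat, (0 < M)%N /\
    forall i : nat, (M <= i)%N -> forall l : int,
      (Pset n S T i l <-> Qset n S T i l) /\ (Qset n S T i l <-> Rset n S T i l).
Proof.
move=> S0 T0 uS uT Sr Tr h1 h2.
set c := seqmin S. set d := gcdST S T.
pose P := fun u v B => forall i, B <= i ->
     (d%:Z %| (v%:Z - u%:Z - (i * c)%N%:Z)%R)%Z -> walkST n S T i u v.
have mono : forall u v B B', P u v B -> B <= B' -> P u v B'.
  by move=> u v B B' H BB' i Bi; apply: H; apply: leq_trans BB' Bi.
have Hpp : forall p, p \in [seq (u, v) | u <- iota 1 n, v <- iota 1 n] -> exists B, P p.1 p.2 B.
  move=> p /allpairsP [[u v] [/= ui vi ->]].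
  rewrite !mem_iota in ui vi.
  have ur : 1 <= u <= n by lia.
  have vr : 1 <= v <= n by lia.
  exact: (per_pair S0 T0 uS uT Sr Tr h1 h2 ur vr).
have [M0 HM0] := unif mono Hpp.
have cS : c \in S by apply: seqmin_mem.
have n1 : 1 <= n by have := (allP Sr) c cS; clear; lia.
exists (maxn M0 1); split; first by rewrite leq_max orbT.
move=> i Hi l.
have QP : Qset n S T i l -> Pset n S T i l.
  move=> [lin [a [b [Hs Hl]]]]; split => //.
  apply/eqP; rewrite eqz_mod_dvd.
  have A1 := sumS_mod S0 T0 uS uT Sr Tr h1 h2 a (fun x (xin : x \in S) => xin).
  have A2 := sumT_mod S0 T0 uS uT Sr Tr h1 h2 b (fun x (xin : x \in T) => xin).
  rewrite -/c -/d in A1 A2 *.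
  have -> : (l - (i * c)%N%:Z = ((\sum_(s <- S) a s * s)%N%:Z - ((\sum_(s <- S) a s) * c)%N%:Z)
     - ((\sum_(t <- T) b t * t)%N%:Z + ((\sum_(t <- T) b t) * c)%N%:Z))%R.
    by rewrite Hl -Hs; lia.
  exact: rpredB.
have PR : Pset n S T i l -> Rset n S T i l.
  move=> [lin Hl]; split => // u v ur vr Euv.
  have := HM0 (u, v) (ltac:(apply/allpairsP; exists (u, v); rewrite !mem_iota; split => //; lia)).
  move=> /= H; apply: H; first by apply: leq_trans (leq_maxl _ _) Hi.
  by rewrite Euv -eqz_mod_dvd; apply/eqP.
have RQ : Rset n S T i l -> Qset n S T i l.
  move=> [lin Hr]; split => //.
  have [u [v [ur [vr Euv]]]] : exists u v, 1 <= u <= n /\ 1 <= v <= n /\ (v%:Z - u%:Z)%R = l.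
    move: lin; rewrite /inIn; case El : l => [k|k] /andP[l1 l2].
      by exists 1, k.+1; split; [lia | split; [lia | clear -n1; lia]].
    by exists k.+2, 1; split; [rewrite NegzE in l1; lia | split; [lia | rewrite NegzE; clear; lia]].
  have [a [b [Hs Hv]]] := counts S0 T0 uS uT Sr Tr h1 h2 (Hr u v ur vr Euv).
  by exists a, b; split => //; rewrite -Euv.
split; split => H.
- exact: RQ (PR H).
- exact: QP H.
- exact: PR (QP H).
- exact: RQ H.
Qed.
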